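(* Let $\zeta_*\in(0,1]$, $\gamma_*\in(0,1]$, and $\nu_*=(1-\zeta_* )\delta_0+\zeta_*\delta_{\gamma_*}$. Then \[ \inf_{\nu:\ \nu((0,\infty))<\frac12\zeta_*}\|F_\nu-F_{\nu_*}\|_\infty\ \ge\ 0.01\,\gamma_*^2\zeta_*, \] where the infimum is over probability distributions $\nu$ on $\mathbb{R}$.
   Context: $\delta_x$ denotes the point mass at $x$. For a probability distribution $\nu$ on $\mathbb{R}$, $F_\nu(t):=\mathbb{P}_{\mu\sim\nu,\,X\sim\mathcal{N}(\mu,1)}(X\le t)$, and $\|\cdot\|_\infty$ is the sup norm over $t\in\mathbb{R}$. *)

(* Defs.v *)
From HB Require Import structures.
From mathcomp Require Import all_boot all_order all_algebra.
From mathcomp Require Import all_classical all_reals all_analysis.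
Set Implicit Arguments. Unset Strict Implicit. Unset Printing Implicit Defensive.
Import Order.TTheory GRing.Theory Num.Theory.
Local Open Scope classical_set_scope.
Local Open Scope ring_scope.

(* F_nu(t) = P_{mu ~ nu, X ~ N(mu,1)}(X <= t)
          = \int nu(dmu) P_{X ~ N(mu,1)}(X <= t). *)
Definition Fmix (R : realType) (nu : {measure set R -> \bar R}) (t : R) : R :=
  fine (\int[nu]_mu (normal_prob mu 1 `]-oo, t]))%E.

(* sup norm over t in R (extended-real valued, so always defined) *)
Definition supnorm (R : realType) (f : R -> R) : \bar R :=
  ereal_sup [set (`|f t|)%:E | t in [set: R]].

(* a real number viewed as a nonnegative number (used only with arguments
   that are nonnegative, where it is the identity) *)
Definition as_nng (R : realType) (x : R) : {nonneg R} := insubd (0%:nng) x.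

Definition nustar (R : realType) (z g : R) : {measure set R -> \bar R} :=
  measure_add (mscale (as_nng (1 - z)) (\d_(0:R)))
              (mscale (as_nng z) (\d_g)).

(* Main.v *)
Require Import Defs.
From HB Require Import structures.
From mathcomp Require Import all_boot all_order all_algebra.
From mathcomp Require Import all_classical all_reals all_analysis.
Import Order.TTheory GRing.Theory Num.Theory.
Local Open Scope classical_set_scope.
Local Open Scope ring_scope.
From mathcomp Require Import measurable_realfun lra ring.

Section S.
Context {R : realType}.
Import numFieldTopology.Exports.

Lemma pdf_shift (mu x : R) : normal_pdf mu 1 x = normal_pdf 0 1 (x - mu).
Proof.
by rewrite /normal_pdf oner_eq0 /normal_fun subr0.
Qed.

Lemma normal_shift (mu t : R) :
  normal_prob mu 1 `]-oo, t] = normal_prob 0 1 `]-oo, t - mu].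
Proof.
rewrite /normal_prob.
have F1 : derive1 (fun x : R => x - mu) = cst 1.
  apply/funext => x; rewrite derive1E deriveB //= derive_id derive_cst subr0 //.
rewrite (@increasing_ge0_integration_by_substitutionNy R (fun x => x - mu) (normal_pdf 0 1) t).
- apply: eq_integral => x _; rewrite pdf_shift; congr EFin; rewrite !fctE F1 /= mulr1 //.
- by move=> x y _ _ xy; rewrite ltrD2r.
- by rewrite F1 => x _; exact: cvg_cst.
- by rewrite F1; exact: is_cvg_cst.
- by rewrite F1; exact: cvg_cst.
- split.
    by move=> x _; apply: derivableB.
  apply: cvg_at_left_filter; apply: cvgB; [exact: cvg_id | exact: cvg_cst].
- exact: cvg_addrr_Ny.
- have hc := @continuous_normal_pdf R 0 1 (oner_neq0 _).
  exact: continuous_subspaceT.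
- by move=> x _; exact: normal_pdf_ge0.
Qed.
End S.


Section S.
Context {R : realType}.
Import numFieldTopology.Exports.

Definition Phi (x : R) := fine (normal_prob 0 1 `]-oo, x]).
Definition Mass (x y : R) := fine (normal_prob (0:R) 1 `]x, y]).
Definition phi (u : R) := normal_pdf 0 1 u.

Lemma nfin (A : set R) : measurable A -> normal_prob (0:R) 1 A \is a fin_num.
Proof. by move=> mA; apply: fin_num_measure. Qed.

Lemma Phi_split x y : x <= y -> Phi y = Phi x + Mass x y.
Proof.
move=> xy; rewrite /Phi /Mass -fineD ?nfin //; congr fine.
rewrite -measureU //.
  by rewrite -itv_bndbnd_setU // bnd_simp.
apply/seteqP; split => z //= [] /=; rewrite !in_itv /= => zx /andP[xz _].
by move: (le_lt_trans zx xz); rewrite ltxx.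
Qed.

Lemma Mass_ge0 x y : 0 <= Mass x y.
Proof. by rewrite /Mass fine_ge0 // measure_ge0. Qed.

Lemma MassE x y : (Mass x y)%:E = (\int[lebesgue_measure]_(u in `]x, y]) (phi u)%:E)%E.
Proof. by rewrite /Mass fineK ?nfin. Qed.

Lemma Mass_lo x y m : x <= y -> 0 <= m ->
  (forall u, x < u <= y -> m <= phi u) -> (y - x) * m <= Mass x y.
Proof.
move=> xy m0 H; rewrite -lee_fin MassE.
have -> : ((y - x) * m)%:E = (\int[lebesgue_measure]_(u in `]x, y]) (cst m%:E u))%E.
  rewrite integral_cst //.
  have := lebesgue_measure_itv `]x, y]%R. rewrite /= => ->.
  rewrite lte_fin; case: ltgtP xy => //= [_ _|-> _].
    by rewrite -EFinD -EFinM mulrC.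
  by rewrite subrr mul0r mule0.
apply: ge0_le_integral => //.
  by apply/measurable_EFinP; apply: measurable_funTS; exact: measurable_normal_pdf.
Qed.

Lemma Mass_hi x y M : x <= y ->
  (forall u, x < u <= y -> phi u <= M) -> Mass x y <= (y - x) * M.
Proof.
move=> xy H; rewrite -lee_fin MassE.
have -> : ((y - x) * M)%:E = (\int[lebesgue_measure]_(u in `]x, y]) (cst M%:E u))%E.
  rewrite integral_cst //.
  have := lebesgue_measure_itv `]x, y]%R. rewrite /= => ->.
  rewrite lte_fin; case: ltgtP xy => //= [_ _|-> _].
    by rewrite -EFinD -EFinM mulrC.
  by rewrite subrr mul0r mule0.
apply: ge0_le_integral => //.
- by move=> u _; rewrite lee_fin normal_pdf_ge0.
- by apply/measurable_EFinP; apply: measurable_funTS; exact: measurable_normal_pdf.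
Qed.

Lemma phiE u : phi u = normal_peak 1 * expR (- (u ^+ 2) / 2).
Proof. by rewrite /phi /normal_pdf oner_eq0 /normal_fun subr0 expr1n. Qed.

Lemma phi_mono u v : `|u| <= `|v| -> phi v <= phi u.
Proof.
move=> uv; rewrite !phiE ler_wpM2l ?normal_peak_ge0 // ler_expR.
rewrite !mulNr lerN2 ler_wpM2r ?invr_ge0 // -(real_normK (num_real u)) -(real_normK (num_real v)).
by apply: lerXn2r => //; rewrite nnegrE.
Qed.

Lemma phi_even x : phi (- x) = phi x.
Proof. by rewrite !phiE sqrrN. Qed.

Lemma phi_le u w : - w <= u -> u <= w -> phi w <= phi u.
Proof.
move=> h1 h2; apply: phi_mono.
have : `|u| <= w by rewrite ler_norml h1 h2.
move/le_trans; apply; exact: ler_norm.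
Qed.

Lemma MassPhi x y : x <= y -> Mass x y = Phi y - Phi x.
Proof. by move=> xy; rewrite (Phi_split _ _ xy); lra. Qed.

Definition Ival s := Phi (s + 1) - Phi (s - 1).

Lemma I_dec s s' : 0 <= s -> s <= s' -> Ival s' <= Ival s.
Proof.
move=> s0 ss'; rewrite /Ival.
have [h|h] := lerP s' (s + 2).
- have e1 : Phi (s' + 1) - Phi (s + 1) = Mass (s + 1) (s' + 1) by rewrite MassPhi //; lra.
  have e2 : Phi (s' - 1) - Phi (s - 1) = Mass (s - 1) (s' - 1) by rewrite MassPhi //; lra.
  have h1 : Mass (s + 1) (s' + 1) <= (s' + 1 - (s + 1)) * phi (s + 1).
    apply: Mass_hi; first lra.
    move=> u /andP[u1 u2]; apply: phi_le; lra.
  have h2 : (s' - 1 - (s - 1)) * phi (s + 1) <= Mass (s - 1) (s' - 1).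
    apply: Mass_lo; [lra | exact: normal_pdf_ge0 |].
    move=> u /andP[u1 u2]; apply: phi_le; lra.
  have e3 : s' + 1 - (s + 1) = s' - 1 - (s - 1) by lra.
  lra.
- have h1 : Mass (s' - 1) (s' + 1) <= (s' + 1 - (s' - 1)) * phi (s' - 1).
    apply: Mass_hi; first lra.
    move=> u /andP[u1 u2]; apply: phi_le; lra.
  have h2 : (s + 1 - (s - 1)) * phi (s + 1) <= Mass (s - 1) (s + 1).
    apply: Mass_lo; [lra | exact: normal_pdf_ge0 |].
    move=> u /andP[u1 u2]; apply: phi_le; lra.
  have h3 : phi (s' - 1) <= phi (s + 1) by apply: phi_le; lra.
  rewrite !MassPhi in h1 h2; lra.
Qed.

Lemma I_inc s s' : s <= 0 -> s' <= s -> Ival s' <= Ival s.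
Proof.
move=> s0 ss'; rewrite /Ival.
have E : phi (s - 1) = phi (1 - s) by rewrite -phi_even opprB.
have [h|h] := lerP (s - 2) s'.
- have e1 : Phi (s + 1) - Phi (s' + 1) = Mass (s' + 1) (s + 1) by rewrite MassPhi //; lra.
  have e2 : Phi (s - 1) - Phi (s' - 1) = Mass (s' - 1) (s - 1) by rewrite MassPhi //; lra.
  have h1 : Mass (s' - 1) (s - 1) <= (s - 1 - (s' - 1)) * phi (s - 1).
    apply: Mass_hi; first lra.
    move=> u /andP[u1 u2]; rewrite E -phi_even; apply: phi_le; lra.
  have h2 : (s + 1 - (s' + 1)) * phi (s - 1) <= Mass (s' + 1) (s + 1).
    apply: Mass_lo; [lra | exact: normal_pdf_ge0 |].
    move=> u /andP[u1 u2]; rewrite E; apply: phi_le; lra.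
  have e3 : s + 1 - (s' + 1) = s - 1 - (s' - 1) by lra.
  lra.
- have h1 : Mass (s' - 1) (s' + 1) <= (s' + 1 - (s' - 1)) * phi (s' + 1).
    apply: Mass_hi; first lra.
    move=> u /andP[u1 u2]; rewrite -(phi_even (s' + 1)) -(phi_even u); apply: phi_le; lra.
  have h2 : (s + 1 - (s - 1)) * phi (s - 1) <= Mass (s - 1) (s + 1).
    apply: Mass_lo; [lra | exact: normal_pdf_ge0 |].
    move=> u /andP[u1 u2]; rewrite E; apply: phi_le; lra.
  have h3 : phi (s' + 1) <= phi (s - 1).
    by rewrite E -phi_even; apply: phi_le; lra.
  rewrite !MassPhi in h1 h2; lra.
Qed.

Lemma peak_lb : 1 / 3 <= normal_peak (1 : R).
Proof.
rewrite /normal_peak expr1n mul1r.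
set s := Num.sqrt _.
have pi4 : pi < 4 :> R by have := @pihalf_lt2 R; lra.
have pi0 : 0 < pi :> R := pi_gt0 R.
have s0 : 0 <= s by exact: sqrtr_ge0.
have s2 : s ^+ 2 = 1 * pi *+ 2 by rewrite sqr_sqrtr // mul1r mulrn_wge0 // ltW.
rewrite mul1r mulr2n in s2.
have sp : 0 < s.
  rewrite lt_neqAle s0 andbT; apply/eqP => s0'.
  by move: s2; rewrite -s0' expr0n /=; lra.
have s3 : s <= 3 by nra.
have k : s * s^-1 = 1 by rewrite divff // gt_eqF.
have c0 : 0 < s^-1 by rewrite invr_gt0.
nra.
Qed.

Lemma exp_lb : 24 / 100 <= expR (- (9 / 8) : R).
Proof.
have -> : - (9 / 8) = (- (9 / 32)) * 4%:R :> R by rewrite /=; lra.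
rewrite expRM_natr.
have a1 : 23 / 32 <= expR (- (9 / 32) : R) by have := expR_ge1Dx (- (9/32) : R); lra.
set a := expR _ in a1 *.
have a2 : 51 / 100 <= a ^+ 2 by rewrite expr2; nra.
have -> : a ^+ 4 = (a ^+ 2) * (a ^+ 2) by rewrite -exprD.
nra.
Qed.

Lemma phi32 : 8 / 100 <= phi (3 / 2).
Proof.
rewrite phiE.
have h1 := peak_lb.
have -> : - ((3 / 2) ^+ 2) / 2 = - (9 / 8) :> R by rewrite expr2; lra.
have h2 := exp_lb.
nra.
Qed.

Lemma gap g : 0 < g -> g <= 1 -> g ^+ 2 / 2 * phi (3 / 2) <= Ival 0 - Ival g.
Proof.
move=> g0 g1; rewrite /Ival.
set h := g / 2.
have hh : g = h + h by rewrite /h; lra.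
have h0 : 0 < h by rewrite /h; lra.
have h1 : h <= 1 / 2 by rewrite /h; lra.
have p0 : 0 <= phi 1 by exact: normal_pdf_ge0.
have m1 : (h - 1 - (-1)) * phi 1 <= Mass (-1) (h - 1).
  apply: Mass_lo; [lra | exact: p0 | move=> u /andP[u1 u2]; apply: phi_le; lra].
have m2 : Mass 1 (1 + h) <= (1 + h - 1) * phi 1.
  apply: Mass_hi; [lra | move=> u /andP[u1 u2]; apply: phi_le; lra].
have m3 : (g - 1 - (h - 1)) * phi (1 - h) <= Mass (h - 1) (g - 1).
  apply: Mass_lo; [lra | exact: normal_pdf_ge0 | move=> u /andP[u1 u2]; apply: phi_le; lra].
have m4 : Mass (1 + h) (g + 1) <= (g + 1 - (1 + h)) * phi (1 + h).
  apply: Mass_hi; [lra | move=> u /andP[u1 u2]; apply: phi_le; lra].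
have e : phi (1 - h) = phi (1 + h) * expR (2 * h).
  rewrite !phiE -mulrA -expRD; congr (_ * expR _); rewrite !expr2; lra.
have ex : 1 + 2 * h <= expR (2 * h) by exact: expR_ge1Dx.
have q : phi (3 / 2) <= phi (1 + h) by apply: phi_le; lra.
have q0 : 0 <= phi (3 / 2) by exact: normal_pdf_ge0.
rewrite !MassPhi in m1 m2 m3 m4; try lra.
rewrite e in m3.
have -> : g ^+ 2 = 4 * h * h by rewrite hh expr2; lra.
rewrite add0r sub0r.
have A0 : 0 <= phi (1 + h) by exact: normal_pdf_ge0.
have s1 : h * phi (1 + h) * (2 * h) <= h * phi (1 + h) * (expR (2 * h) - 1).
  by apply: ler_wpM2l; [apply: mulr_ge0; lra | lra].
have s2 : h * h * 2 * phi (3 / 2) <= h * phi (1 + h) * (2 * h) by nra.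
clearbody h; subst g.
lra.
Qed.
End S.

Lemma final_arith {R : realFieldType} (z g p Ig I0 nb na c : R) :
 0 < z -> 0 <= p -> p < z / 2 -> 8 / 100 <= c -> g ^+ 2 / 2 * c <= I0 - Ig ->
 nb - na <= Ig + (I0 - Ig) * p ->
 2 * (1 / 100 * g ^+ 2 * z) <= ((1 - z) * Ig + z * I0) - (nb - na).
Proof.
move=> z0 p0 pz c8 hg hn.
have g2 : 0 <= g ^+ 2 by exact: sqr_ge0.
have hI : 0 <= I0 - Ig.
  apply: le_trans hg; apply: mulr_ge0; [by apply: mulr_ge0; lra | lra].
have k1 : z / 2 * (I0 - Ig) <= (z - p) * (I0 - Ig) by apply: ler_wpM2r => //; lra.
have k3 : g ^+ 2 / 2 * (8 / 100) <= g ^+ 2 / 2 * c.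
  by apply: ler_wpM2l => //; apply: mulr_ge0; lra.
have k2 : z / 2 * (g ^+ 2 / 2 * (8 / 100)) <= z / 2 * (I0 - Ig).
  by apply: ler_wpM2l; [lra | exact: le_trans k3 hg].
have e : (1 - z) * Ig + z * I0 - (Ig + (I0 - Ig) * p) = (z - p) * (I0 - Ig) by ring.
have e2 : z / 2 * (g ^+ 2 / 2 * (8 / 100)) = 2 * (1 / 100 * g ^+ 2 * z) by field.
lra.
Qed.

Lemma pick_abs {R : realFieldType} (x a b : R) : 2 * x <= a - b -> x <= `|a| \/ x <= `|b|.
Proof.
move=> h; have := ler_norm a; have := ler_norm (- b); rewrite normrN => h1 h2.
case: (lerP x `|a|) => h3; first by left.
by right; lra.
Qed.

Lemma rearr {R : realFieldType} (Na Nb Sa Sb : R) :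
  Sb - Sa - (Nb - Na) = Na - Sa - (Nb - Sb).
Proof. by ring. Qed.


Section T.
Context {R : realType}.
Import numFieldTopology.Exports.

Lemma Phi_mono (x y : R) : x <= y -> Phi x <= Phi y.
Proof. by move=> xy; rewrite (Phi_split _ _ xy) lerDl Mass_ge0. Qed.

Lemma Phi_ge0 (x : R) : 0 <= Phi x.
Proof. by rewrite /Phi fine_ge0 // measure_ge0. Qed.

Lemma Phi_le1 (x : R) : Phi x <= 1.
Proof.
rewrite /Phi -lee_fin fineK ?nfin //.
exact: probability_le1.
Qed.

Lemma FmixE (nu : {measure set R -> \bar R}) t :
  Fmix nu t = fine (\int[nu]_mu (Phi (t - mu))%:E)%E.
Proof.
rewrite /Fmix; congr fine; apply: eq_integral => mu _.
by rewrite normal_shift /Phi fineK // nfin.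
Qed.

Lemma mPhi (t : R) : measurable_fun setT (fun mu : R => (Phi (t - mu))%:E).
Proof.
apply/measurable_EFinP; apply: nonincreasing_measurable => // x y xy.
by apply: Phi_mono; lra.
Qed.

Lemma as_nngE (x : R) : 0 <= x -> (as_nng x)%:num = x.
Proof. move=> x0; rewrite /as_nng insubdK //. by rewrite unfold_in /= /Itv.num_sem /= num_real /= in_itv /= x0. Qed.

Lemma int_star (z g : R) (f : R -> R) : 0 <= z -> z <= 1 ->
  measurable_fun setT f -> (forall x, 0 <= f x) ->
  (\int[nustar z g]_mu (f mu)%:E)%E = ((1 - z) * f 0 + z * f g)%:E.
Proof.
move=> z0 z1 mf f0.
have mf' : measurable_fun setT (fun x => (f x)%:E) by apply/measurable_EFinP.
rewrite /nustar ge0_integral_measure_add //; last by move=> x _; rewrite lee_fin.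
rewrite !ge0_integral_mscale //; try by move=> x _; rewrite lee_fin.
by rewrite !integral_dirac // !diracT !mul1e !as_nngE //; lra.
Qed.

Lemma int01 (nu : probability R R) (f : R -> R) :
  measurable_fun setT f -> (forall x, 0 <= f x <= 1) ->
  (\int[nu]_x (f x)%:E)%E \is a fin_num.
Proof.
move=> mf f01.
have h0 : (0 <= \int[nu]_x (f x)%:E)%E.
  by apply: integral_ge0 => x _; rewrite lee_fin; case/andP: (f01 x).
have h1 : (\int[nu]_x (f x)%:E <= 1)%E.
  apply: (@le_trans _ _ (\int[nu]_x (cst 1%:E x))%E).
    apply: ge0_le_integral => //.
    - by move=> x _; rewrite lee_fin; case/andP: (f01 x).
    - exact/measurable_EFinP.
    - by move=> x _; rewrite lee_fin; case/andP: (f01 x).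
  by rewrite integral_cst // mul1e; exact: probability_le1.
rewrite fin_numElt; apply/andP; split.
  by apply: (lt_le_trans _ h0); rewrite ltNyr.
by apply: (le_lt_trans h1); rewrite ltry.
Qed.

Lemma setT_split : [set: R] = `]-oo, 0] `|` `]0, +oo[.
Proof.
apply/seteqP; split => x // _ /=; rewrite !in_itv /=.
by case: (lerP x 0) => _; [left | right].
Qed.

Lemma disj_split : [disjoint `]-oo, (0:R)] & `]0, +oo[].
Proof.
apply/disj_setPS => x [] /=; rewrite !in_itv /= andbT => h1 h2.
by move: (le_lt_trans h1 h2); rewrite ltxx.
Qed.

Lemma nu_bound (nu : probability R R) (g : R) : 0 < g ->
  Fmix nu (g + 1) - Fmix nu (g - 1) <= Ival g + (Ival 0 - Ival g) * fine (nu `](0%R:R), +oo[%classic).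
Proof.
move=> g0; rewrite !FmixE.
set G := fun mu : R => Phi (g + 1 - mu) - Phi (g - 1 - mu).
have G0 : forall mu, 0 <= G mu by move=> mu; rewrite subr_ge0; apply: Phi_mono; lra.
have G1 : forall mu, G mu <= 1.
  move=> mu; have := Phi_ge0 (g - 1 - mu); have := Phi_le1 (g + 1 - mu); rewrite /G; lra.
have GE : forall mu, G mu = Ival (g - mu).
  move=> mu; rewrite /G /Ival.
  have -> : g + 1 - mu = g - mu + 1 by lra.
  by have -> : g - 1 - mu = g - mu - 1 by lra.
have mP : forall t, measurable_fun setT (fun mu : R => Phi (t - mu)).
  by move=> t; apply/measurable_EFinP; exact: mPhi.
have mG : measurable_fun setT G by apply: measurable_funB; apply: mP.
have P01 : forall t (mu : R), 0 <= Phi (t - mu) <= 1.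
  by move=> t mu; rewrite Phi_ge0 Phi_le1.
have -> : (\int[nu]_mu (Phi (g + 1 - mu))%:E)%E =
          (\int[nu]_mu (Phi (g - 1 - mu))%:E + \int[nu]_mu (G mu)%:E)%E.
  rewrite -ge0_integralD //.
  - by apply: eq_integral => mu _; rewrite -EFinD /G; congr EFin; lra.
  - by move=> x _; rewrite lee_fin Phi_ge0.
  - exact: mPhi.
  - by move=> x _; rewrite lee_fin.
  - exact/measurable_EFinP.
rewrite fineD; [| by apply: int01; [exact: mP | move=> x; exact: P01]
                | by apply: int01; [exact: mG | move=> x; rewrite G0 G1]].
rewrite [X in X - _]addrC addrK.
have pfin : nu `](0%R:R), +oo[%classic \is a fin_num by apply: fin_num_measure.
have qfin : nu `]-oo, (0%R:R)]%classic \is a fin_num by apply: fin_num_measure.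
have pq : (nu `]-oo, (0%R:R)]%classic + nu `](0%R:R), +oo[%classic = 1)%E.
  by rewrite -measureU //; [rewrite -setT_split; exact: probability_setT | apply/eqP; exact: disj_split].
set p := fine (nu `](0%R:R), +oo[%classic).
have pE : nu `](0%R:R), +oo[%classic = p%:E by rewrite /p fineK.
have qE : nu `]-oo, (0%R:R)]%classic = (1 - p)%:E.
  by move: pq; rewrite pE -(fineK qfin) -EFinD => -[<-]; rewrite addrK.
rewrite -lee_fin fineK; last by apply: int01; [exact: mG | move=> x; rewrite G0 G1].
rewrite setT_split ge0_integral_setU //; last first.
- exact: disj_split.
- by move=> x _; rewrite lee_fin.
- by rewrite -setT_split; apply/measurable_EFinP.
have A : (\int[nu]_(mu in `]-oo, (0%R:R)]) (G mu)%:E <= (Ival g)%:E * nu `]-oo, (0%R:R)]%classic)%E.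
  rewrite -integral_cst //.
  apply: ge0_le_integral => //.
  - by move=> x _; rewrite lee_fin.
  - by apply/measurable_EFinP; apply: measurable_funTS.
  - move=> x; rewrite /= in_itv /= => x0; rewrite lee_fin GE.
    by apply: I_dec; lra.
have B : (\int[nu]_(mu in `](0%R:R), +oo[) (G mu)%:E <= (Ival 0)%:E * nu `](0%R:R), +oo[%classic)%E.
  rewrite -integral_cst //.
  apply: ge0_le_integral => //.
  - by move=> x _; rewrite lee_fin.
  - by apply/measurable_EFinP; apply: measurable_funTS.
  - move=> x; rewrite /= in_itv /= andbT => x0; rewrite lee_fin GE.
    case: (lerP 0 (g - x)) => h; first by apply: I_dec; lra.
    by apply: I_inc; lra.
apply: (le_trans (leeD A B)).
rewrite pE qE -!EFinM -EFinD lee_fin.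
have -> : Ival g * (1 - p) + Ival 0 * p = Ival g + (Ival 0 - Ival g) * p by ring.
by [].
Qed.
End T.


Section U.
Context {R : realType}.

Lemma star_diff (z g : R) : 0 <= z -> z <= 1 ->
  Fmix (nustar z g) (g + 1) - Fmix (nustar z g) (g - 1) = (1 - z) * Ival g + z * Ival 0.
Proof.
move=> z0 z1.
have mP : forall t, measurable_fun setT (fun mu : R => Phi (t - mu)).
  by move=> t; apply/measurable_EFinP; exact: mPhi.
rewrite !FmixE !int_star //; try (by apply: mP); try (by move=> x; apply: Phi_ge0).
rewrite /= /Ival !subr0.
have -> : g + 1 - g = 0 + 1 by ring.
have -> : g - 1 - g = 0 - 1 by ring.
ring.
Qed.

Lemma sup_ge (f : R -> R) t : ((`|f t|)%:E <= supnorm f)%E.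
Proof. by apply: ereal_sup_ubound; exists t. Qed.

End U.

Theorem lemma5 (R : realType) (zeta gamma : R) :
  0 < zeta -> zeta <= 1 -> 0 < gamma -> gamma <= 1 ->
  forall nu : probability R R,
    (nu `]0%R, +oo[%classic < (zeta / 2)%:E)%E ->
    ((1 / 100 * gamma ^+ 2 * zeta)%R%:E <=
       supnorm (fun t => (Fmix nu t - Fmix (nustar zeta gamma) t)%R))%E.
Proof.
move=> z0 z1 g0 g1 nu hp.
have pfin : nu `]0%R, +oo[%classic \is a fin_num by apply: fin_num_measure.
have p0 : 0 <= fine (nu `]0%R, +oo[%classic) by rewrite fine_ge0 // measure_ge0.
have pz : fine (nu `]0%R, +oo[%classic) < zeta / 2.
  by rewrite -lte_fin fineK.
have hnu := @nu_bound R nu gamma g0.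
have hst := @star_diff R zeta gamma (ltW z0) z1.
have hgap := @gap R gamma g0 g1.
have h32 := @phi32 R.
have key := final_arith _ _ _ _ _ _ _ _ z0 p0 pz h32 hgap hnu.
rewrite -hst in key.
have key2 : 2 * (1 / 100 * gamma ^+ 2 * zeta) <=
   (Fmix nu (gamma - 1) - Fmix (nustar zeta gamma) (gamma - 1)) -
   (Fmix nu (gamma + 1) - Fmix (nustar zeta gamma) (gamma + 1)).
  by rewrite -rearr.
case: (pick_abs _ _ _ key2) => h.
- by apply: le_trans (sup_ge _ (gamma - 1)); rewrite lee_fin.
- by apply: le_trans (sup_ge _ (gamma + 1)); rewrite lee_fin.
Qed.
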